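(* In the setting of the cascaded network $\mathrm{GradNetC}$ (defined by $\boldsymbol{z}_0=\boldsymbol{\beta}_0\odot\boldsymbol{W}\boldsymbol{x}+\boldsymbol{b}_0$, $\boldsymbol{z}_\ell=\boldsymbol{\beta}_\ell\odot\boldsymbol{W}\boldsymbol{x}+\boldsymbol{\alpha}_\ell\odot\sigma_\ell(\boldsymbol{z}_{\ell-1})+\boldsymbol{b}_\ell$ for $1\le\ell\le L-1$, and $\mathrm{GradNetC}(\boldsymbol{x})=\boldsymbol{W}^\top[\boldsymbol{\alpha}_L\odot\sigma_L(\boldsymbol{z}_{L-1})]+\boldsymbol{b}_L$, with $\boldsymbol{W}\in\mathbb{R}^{n\times d}$, $\boldsymbol{\alpha}_\ell,\boldsymbol{\beta}_\ell,\boldsymbol{b}_\ell\in\mathbb{R}^n$, $\boldsymbol{b}_L\in\mathbb{R}^d$), suppose that all $\boldsymbol{\alpha}_\ell$ ($1\le\ell\le L$) and $\boldsymbol{\beta}_\ell$ ($0\le\ell\le L-1$) have nonnegative entries and each $\sigma_\ell$ is a differentiable, monotonically increasing elementwise activation. Then $\mathrm{GradNetC}$ is the gradient of a convex continuously differentiable function on $\mathbb{R}^d$, i.e. an mGradNet.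
   Context: $\odot$ is the entrywise product. An elementwise activation $\sigma:\mathbb{R}^n\to\mathbb{R}^n$ has the form $\sigma(\boldsymbol{z})=(s_1(z_1),\dots,s_n(z_n))$; it is monotonically increasing if each $s_j$ is. An mGradNet is a function $f:\mathbb{R}^d\to\mathbb{R}^d$ with $f=\nabla F$ for some convex continuously differentiable $F:\mathbb{R}^d\to\mathbb{R}$. *)

(* Defs.v *)
From HB Require Import structures.
From mathcomp Require Import all_boot all_order all_algebra.
From mathcomp Require Import all_classical all_reals all_analysis.
Set Implicit Arguments. Unset Strict Implicit. Unset Printing Implicit Defensive.
Import Order.TTheory GRing.Theory Num.Theory.
Import numFieldNormedType.Exports.
Local Open Scope ring_scope.

(* Vectors of R^k are row vectors 'rV[R]_k; W x is written x *m W^T and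
   W^T v is written v *m W. *)

Definition hprod (R : realType) (n : nat) (a b : 'rV[R]_n) : 'rV[R]_n :=
  \row_j (a 0 j * b 0 j).

Definition elementwise (R : realType) (n : nat) (s : 'I_n -> R -> R)
  (z : 'rV[R]_n) : 'rV[R]_n := \row_j s j (z 0 j).

Definition mono_diff_activation (R : realType) (n : nat) (s : 'I_n -> R -> R) :=
  forall j : 'I_n, (forall u v : R, u <= v -> s j u <= s j v) /\
                   (forall u : R, derivable (s j) u 1).

Fixpoint gradnetC_z (R : realType) (d n : nat) (W : 'M[R]_(n, d))
  (alpha beta b : nat -> 'rV[R]_n) (sigma : nat -> 'I_n -> R -> R)
  (l : nat) (x : 'rV[R]_d) : 'rV[R]_n :=
  match l with
  | 0 => hprod (beta 0%N) (x *m W^T) + b 0%N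
  | l'.+1 => hprod (beta l) (x *m W^T)
             + hprod (alpha l) (elementwise (sigma l)
                          (gradnetC_z W alpha beta b sigma l' x))
             + b l
  end.

Definition gradnetC (R : realType) (d n L : nat) (W : 'M[R]_(n, d))
  (alpha beta b : nat -> 'rV[R]_n) (sigma : nat -> 'I_n -> R -> R)
  (bL : 'rV[R]_d) (x : 'rV[R]_d) : 'rV[R]_d :=
  hprod (alpha L) (elementwise (sigma L) (gradnetC_z W alpha beta b sigma L.-1 x))
    *m W + bL.

Definition convex_fun (R : realType) (d : nat) (F : 'rV[R]_d -> R) :=
  forall (x y : 'rV[R]_d) (t : R), 0 <= t <= 1 ->
    F (t *: x + (1 - t) *: y) <= t * F x + (1 - t) * F y.

(* f = grad F: F is (Frechet) differentiable at every point, its differential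
   at x is v |-> <f x, v>; together with continuity of f = grad F this is
   exactly "F is continuously differentiable with gradient f". *)
Definition is_C1_gradient (R : realType) (d : nat) (F : 'rV[R]_d -> R)
  (f : 'rV[R]_d -> 'rV[R]_d) :=
  (forall x : 'rV[R]_d, differentiable F x /\
     forall v : 'rV[R]_d, 'd F x v = (f x *m v^T) 0 0) /\
  continuous f.

Definition mGradNet (R : realType) (d : nat) (f : 'rV[R]_d -> 'rV[R]_d) :=
  exists F : 'rV[R]_d -> R, convex_fun F /\ is_C1_gradient F f.

(* Main.v *)
Require Import Defs.
From HB Require Import structures.
From mathcomp Require Import all_boot all_order all_algebra.
From mathcomp Require Import all_classical all_reals all_analysis.
Import Order.TTheory GRing.Theory Num.Theory.
Import numFieldNormedType.Exports.
Local Open Scope ring_scope.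
From mathcomp Require Import lra ring.

Module Helpers.
Set Implicit Arguments. Unset Strict Implicit. Unset Printing Implicit Defensive.
Local Open Scope classical_set_scope.
Local Open Scope ring_scope.

Section scalar.
Context {R : realType}.

Lemma supp_line (G g : R -> R) :
  (forall x : R, is_derive x (1:R) G (g x)) ->
  (forall x y, x <= y -> g x <= g y) ->
  forall z x, G z + g z * (x - z) <= G x.
Proof.
move=> dG gmono z x.
have isd := dG.
have cG : forall a b, {within `[a, b], continuous G}.
  move=> a b; apply: derivable_within_continuous => t _; exact: (@ex_derive _ _ _ _ _ _ _ (dG t)).
have [xz|zx|<-] := ltgtP x z; last by rewrite subrr mulr0 addr0.
- have [c /[!in_itv] /= /andP[xc cz] E] := MVT xz (fun t _ => isd t) (cG x z).
  have : g c * (z - x) <= g z * (z - x).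
    by apply: ler_wpM2r; [rewrite subr_ge0 ltW|apply: gmono; rewrite ltW].
  rewrite -E; nra.
- have [c /[!in_itv] /= /andP[zc cx] E] := MVT zx (fun t _ => isd t) (cG z x).
  have : g z * (x - z) <= g c * (x - z).
    by apply: ler_wpM2r; [rewrite subr_ge0 ltW|apply: gmono; rewrite ltW].
  rewrite -E; nra.
Qed.

End scalar.

Definition antider {R : realType} (g : R -> R) (y : R) : R :=
  let P (a y : R) := (\int[(@lebesgue_measure R)]_(t in `[a, y]) g t)%R in
  P (Num.min y 0 - 1) y - P (Num.min y 0 - 1) 0.

Section antideriv.
Context {R : realType}.
Notation mu := (@lebesgue_measure R).
Variable g : R -> R.
Hypothesis gc : continuous g.

Let P (a y : R) := (\int[mu]_(t in `[a, y]) g t)%R.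

Let intg (a y : R) : mu.-integrable `[a, y] (EFin \o g).
Proof.
apply: continuous_compact_integrable; first exact: segment_compact.
exact: continuous_subspaceT.
Qed.

Let Psplit a a' y : a <= a' -> a' <= y -> P a y = P a a' + P a' y.
Proof.
move=> aa' a'y.
have := @Rintegral_itvB R g (BLeft a) (BRight y) a' (intg a y).
rewrite !bnd_simp => /(_ aa' a'y) E.
rewrite /P -(@Rintegral_itv_obnd_cbnd _ a' (BRight y)); last first.
  by apply: integrableS (intg a y) => //; apply: subset_itvr; rewrite bnd_simp.
by rewrite -E addrC subrK.
Qed.

Let H a y := P a y - P a 0.

Let Hind a a' y : a <= a' -> a' <= Num.min y 0 -> H a y = H a' y.
Proof.
move=> aa' a'm; rewrite /H (@Psplit a a' y) ?(@Psplit a a' 0) //.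
- by rewrite opprD addrACA subrr add0r.
- by rewrite (le_trans a'm) // ge_min lexx orbT.
- by rewrite (le_trans a'm) // ge_min lexx.
Qed.

Lemma antiderP (x : R) : is_derive x (1:R) (antider g) (g x).
Proof.
rewrite (_ : antider g = (fun y => H (Num.min y 0 - 1) y)); last by [].
set a0 := Num.min x 0 - 2.
have near_eq : \near x, H a0 x = H (Num.min x 0 - 1) x.
  have := @near_in_itvoy R (x - 1) x.
  rewrite in_itv /= andbT ltrBlDr ltrDl ltr01 => /(_ isT).
  apply: filterS => y; rewrite in_itv /= andbT => xy.
  apply: Hind; last by rewrite lerBlDr lerDl.
  rewrite /a0 lerBlDr -addrA (_ : -1 + 2 = 1 :> R); last by lra.
  have [hx|hx] := leP x 0; have [hy|hy] := leP y 0;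
    rewrite ?(min_l hx) ?(min_l hy) ?(min_r (ltW hx)) ?(min_r (ltW hy)); lra.
have dP : is_derive x (1:R) (P a0) (g x).
  have [] := @continuous_FTC1_closed R g a0 x (x + 1).
  - by rewrite ltrDl.
  - exact: intg.
  - rewrite /a0; have : Num.min x 0 <= x by rewrite ge_min lexx.
    lra.
  - exact: gc.
  move=> d1 d2; apply: DeriveDef d1 _.
  by rewrite -derive1E.
have dH : is_derive x (1:R) (H a0) (g x).
  have := is_deriveB dP (is_derive_cst (P a0 0) x 1).
  by rewrite subr0.
apply: near_eq_is_derive dH.
exact: near_eq.
Qed.
End antideriv.


Section lin.
Context {R : realType}.

Definition linc (m k : nat) (M : 'M[R]_(m, k)) (j : 'I_k) (y : 'rV[R]_m) : R :=
  (y *m M) 0 j.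

Lemma linc_sum m k (M : 'M[R]_(m, k)) j :
  linc M j = \sum_(i < m) (fun y : 'rV[R]_m => y 0 i *: M i j).
Proof.
apply/funext => y; rewrite fct_sumE /linc mxE; apply: eq_bigr => i _.
by [].
Qed.

Lemma linc_differentiable m k (M : 'M[R]_(m, k)) j x :
  differentiable (linc M j) x.
Proof.
rewrite linc_sum; apply: differentiable_sum => i.
exact/differentiableZl/differentiable_coord.
Qed.

Lemma linc_continuous m k (M : 'M[R]_(m, k)) j : continuous (linc M j).
Proof. by move=> x; apply: differentiable_continuous; exact: linc_differentiable. Qed.

Lemma linc_linear m k (M : 'M[R]_(m, k)) j : linear (linc M j).
Proof. by move=> a u v; rewrite /linc mulmxDl -scalemxAl !mxE. Qed.

Lemma linc_diff m k (M : 'M[R]_(m, k)) j x :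
  'd (linc M j) x = linc M j :> ('rV[R]_m -> R).
Proof.
pose lM := GRing.isLinear.Build _ _ _ _ _ (linc_linear M j).
pose lL : {linear 'rV[R]_m -> R} := HB.pack (linc M j) lM.
have -> : linc M j = lL by [].
apply: diff_lin; exact: linc_continuous.
Qed.

Lemma diff_sum' (V W : normedModType R) k (f : 'I_k -> V -> W) (x v : V) :
  (forall i, differentiable (f i) x) ->
  'd (\sum_(i < k) f i) x v = \sum_(i < k) 'd (f i) x v.
Proof.
elim: k f => [|k IH] f H.
  by rewrite !big_ord0 diff_cst.
rewrite big_ord_recr /= diffD //=; last first.
  exact: differentiable_sum.
by rewrite IH // big_ord_recr.
Qed.

Lemma cont_sum (T : topologicalType) (V : normedModType R) k
  (f : 'I_k -> T -> V) x :
  (forall i, {for x, continuous (f i)}) ->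
  {for x, continuous (fun y => \sum_(i < k) f i y)}.
Proof.
elim: k f => [|k IH] f H.
  have -> : (fun y => \sum_(i < 0) f i y) = cst 0.
    by apply/funext => y; rewrite big_ord0.
  exact: cst_continuous.
have -> : (fun y => \sum_(i < k.+1) f i y) =
    (fun y => \sum_(i < k) f (widen_ord (leqnSn k) i) y) + f ord_max.
  by apply/funext => y; rewrite big_ord_recr.
apply: continuousD; last exact: H.
by apply: IH => i; exact: H.
Qed.

End lin.

End Helpers.
Import Helpers.


Fixpoint hj (R : realType) (n : nat) (alpha beta b : nat -> 'rV[R]_n)
  (sigma : nat -> 'I_n -> R -> R) (j : 'I_n) (l : nat) (t : R) : R :=
  match l with
  | 0 => beta 0%N 0 j * t + b 0%N 0 j
  | l'.+1 => beta l 0 j * t + alpha l 0 j * sigma l j (hj _ _ alpha beta b sigma j l' t)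
             + b l 0 j
  end.
Arguments hj {R n}.

Lemma cont_aff (R : realType) (a c e : R) (h : R -> R) :
  continuous h -> continuous (fun t : R => a * t + c * h t + e).
Proof.
move=> hc t.
apply: cvgD; last exact: cvg_cst.
apply: cvgD; apply: cvgM; try exact: cvg_cst.
  exact: cvg_id.
exact: hc.
Qed.

Lemma cont_aff0 (R : realType) (a e : R) :
  continuous (fun t : R => a * t + e).
Proof.
move=> t; apply: cvgD; last exact: cvg_cst.
apply: cvgM; [exact: cvg_cst|exact: cvg_id].
Qed.

Lemma hprodE (R : realType) n (a c : 'rV[R]_n) j : hprod a c 0 j = a 0 j * c 0 j.
Proof. by rewrite mxE. Qed.

Lemma elementwiseE (R : realType) n (s : 'I_n -> R -> R) (z : 'rV[R]_n) j :
  elementwise s z 0 j = s j (z 0 j).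
Proof. by rewrite mxE. Qed.

Lemma z_eq (R : realType) (d n : nat) (W : 'M[R]_(n, d))
  (alpha beta b : nat -> 'rV[R]_n) (sigma : nat -> 'I_n -> R -> R) l x j :
  gradnetC_z W alpha beta b sigma l x 0 j = hj alpha beta b sigma j l ((x *m W^T) 0 j).
Proof.
elim: l => [|l IH] /=.
  by rewrite [LHS]mxE hprodE.
by rewrite !mxE IH !mxE.
Qed.

Theorem corollary4 (R : realType) (d n L : nat) (W : 'M[R]_(n, d))
  (alpha beta b : nat -> 'rV[R]_n) (bL : 'rV[R]_d)
  (sigma : nat -> 'I_n -> R -> R) :
  (1 <= L)%N ->
  (forall l : nat, (1 <= l <= L)%N -> forall j : 'I_n, 0 <= alpha l 0 j) ->
  (forall l : nat, (l <= L.-1)%N -> forall j : 'I_n, 0 <= beta l 0 j) ->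
  (forall l : nat, (1 <= l <= L)%N -> mono_diff_activation (sigma l)) ->
  mGradNet (gradnetC L W alpha beta b sigma bL).
Proof.
move=> hL ha hb hs.
have scont : forall l, (1 <= l <= L)%N -> forall j, continuous (sigma l j).
  move=> l hl j u; apply: differentiable_continuous; apply/derivable1_diffP.
  exact: ((hs l hl j).2 u).
have hmono : forall l, (l <= L.-1)%N -> forall j,
    (forall s t, s <= t -> hj alpha beta b sigma j l s <= hj alpha beta b sigma j l t)
    /\ continuous (hj alpha beta b sigma j l).
  elim=> [|l IH] hl j.
    split.
      move=> s t st /=; rewrite lerD2r; apply: ler_wpM2l => //; exact: hb.
    exact: cont_aff0.
  have hl' : (l <= L.-1)%N by apply: ltnW.
  have hl1 : (1 <= l.+1 <= L)%N by rewrite /= (leq_trans hl (leq_pred L)).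
  have [IHm IHc] := IH hl' j.
  split.
    move=> s t st /=; rewrite lerD2r; apply: lerD.
      apply: ler_wpM2l => //; exact: hb.
    apply: ler_wpM2l; first exact: ha.
    by apply: (hs _ hl1 j).1; apply: IHm.
  apply: cont_aff.
  move=> t; apply: (@continuous_comp _ _ _ (hj alpha beta b sigma j l) (sigma l.+1 j)).
    exact: IHc.
  exact: scont.
pose g (j : 'I_n) (t : R) := alpha L 0 j * sigma L j (hj alpha beta b sigma j L.-1 t).
have hLL : (1 <= L <= L)%N by rewrite hL leqnn.
have gmono : forall j s t, s <= t -> g j s <= g j t.
  move=> j s t st; rewrite /g; apply: ler_wpM2l; first exact: ha.
  by apply: (hs _ hLL j).1; apply: (hmono _ (leqnn _) j).1.
have gcont : forall j, continuous (g j).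
  move=> j t; rewrite /g; apply: cvgM; first exact: cvg_cst.
  apply: (@continuous_comp _ _ _ (hj alpha beta b sigma j L.-1) (sigma L j)).
    exact: (hmono _ (leqnn _) j).2.
  exact: scont.
pose G (j : 'I_n) := antider (g j).
have Gd : forall j t, is_derive t (1:R) (G j) (g j t).
  by move=> j t; apply: antiderP.
pose F := fun x : 'rV[R]_d => \sum_(j < n) G j (linc W^T j x) + linc bL^T 0 x.
have fE : gradnetC L W alpha beta b sigma bL =
    (fun x => \sum_(j < n) g j (linc W^T j x) *: row j W + bL).
  apply/funext => x; rewrite /gradnetC mulmx_sum_row; congr (_ + _).
  by apply: eq_bigr => j _; rewrite hprodE elementwiseE z_eq.
exists F; split.
  move=> x y t /andP[t0 t1].
  have lc : forall k (M : 'M[R]_(d, k)) j,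
      linc M j (t *: x + (1 - t) *: y) = t * linc M j x + (1 - t) * linc M j y.
    by move=> k M j; rewrite /linc mulmxDl -!scalemxAl !mxE.
  have key : forall j a c, G j (t * a + (1 - t) * c) <= t * G j a + (1 - t) * G j c.
    move=> j a c.
    set z := t * a + (1 - t) * c.
    have h1 := supp_line (Gd j) (gmono j) z a.
    have h2 := supp_line (Gd j) (gmono j) z c.
    have E : t * (G j z + g j z * (a - z)) + (1 - t) * (G j z + g j z * (c - z))
        = G j z by rewrite /z; ring.
    rewrite -{1}E; apply: lerD; apply: ler_wpM2l => //; by rewrite subr_ge0.
  rewrite /F (eq_bigr _ (fun j _ => congr1 (G j) (lc _ W^T j))) lc.
  rewrite mulrDr [X in _ <= _ + X]mulrDr !mulr_sumr addrACA -big_split /=.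
  apply: lerD => //.
  by apply: ler_sum => j _; apply: key.
split.
  move=> x.
  have Fe : F = (\sum_(j < n) (G j \o linc W^T j)) + linc bL^T 0.
    by apply/funext => y; rewrite /F fct_sumE.
  have dG : forall j u, differentiable (G j) u.
    by move=> j u; apply/derivable1_diffP; exact: (@ex_derive _ _ _ _ _ _ _ (Gd j u)).
  have dc : forall j, differentiable (G j \o linc W^T j) x.
    by move=> j; apply: differentiable_comp; [exact: linc_differentiable|exact: dG].
  have d1 : differentiable (\sum_(j < n) (G j \o linc W^T j)) x.
    exact: differentiable_sum.
  have d2 := linc_differentiable bL^T 0 x.
  split.
    by rewrite Fe; apply: differentiableD.
  move=> v; rewrite Fe (diffD d1 d2) /= diff_sum' // linc_diff.
  have dterm : forall j, 'd (G j \o linc W^T j) x v = linc W^T j v * g j (linc W^T j x).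
    move=> j; rewrite (diff_comp (linc_differentiable W^T j x) (dG j _)) /=.
    have -> : 'd (linc W^T j) x v = linc W^T j v.
      exact: (congr1 (fun f => f v) (linc_diff W^T j x)).
    rewrite deriv1E; last exact: (@ex_derive _ _ _ _ _ _ _ (Gd j _)).
    by rewrite derive1E (@derive_val _ _ _ _ _ _ _ (Gd j _)).
  rewrite (eq_bigr (fun j => linc W^T j v * g j (linc W^T j x))); last first.
    by move=> j _; apply: dterm.
  rewrite fE /= mulmxDl [X in _ = X]mxE.
  congr (_ + _).
    rewrite mulmx_suml summxE; apply: eq_bigr => j _.
    rewrite -scalemxAl mxE mulrC; congr (_ * _).
    by rewrite /linc !mxE; apply: eq_bigr => i _; rewrite !mxE mulrC.
  by rewrite /linc !mxE; apply: eq_bigr => i _; rewrite !mxE mulrC.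
rewrite fE => x.
apply: (@continuousD _ _ _ (fun x => \sum_(j < n) g j (linc W^T j x) *: row j W) (cst bL)); last exact: cst_continuous.
apply: cont_sum => j; apply: continuousZr_tmp.
apply: (@continuous_comp _ _ _ (linc W^T j) (g j)).
  exact: linc_continuous.
exact: gcont.
Qed.
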